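(* Let $F:\mathbb{R}^n\to\mathbb{R}$ be a convex differentiable function and assume there exists a minimizer $x_*$ of $F$. Let $\xi^{(1)},\dots,\xi^{(T)}$ be i.i.d. random variables. Let $\mu_x,\mu_y\in[0,1)$, and let $z^{(1)},\dots,z^{(T)}$ be arbitrary (random) iterates produced by a base optimizer, with the Generalized Primal Averaging sequences defined by $x^{(1)}=z^{(1)}$ and $$y^{(t)}=\mu_y x^{(t)}+(1-\mu_y)z^{(t)},\qquad x^{(t+1)}=\mu_x x^{(t)}+(1-\mu_x)z^{(t+1)}.$$ Let $\bar{x}^{(T)}=\frac1T\sum_{t=1}^T x^{(t)}$. Then $$\mathbb{E}[F(\bar{x}^{(T)})-F(x_* )]\le \frac1T\sum_{t=1}^T\mathbb{E}[\langle\nabla F(y^{(t)}),z^{(t)}-x_*\rangle]+\frac{\mu_x}{1-\mu_x}\frac1T\mathbb{E}[F(x^{(1)})-F(x_* )]$$ $$-\frac{1}{1-\mu_y}\frac1T\sum_{t=1}^T\mathbb{E}[B_F(y^{(t)},x^{(t)})]-\frac{\mu_y}{1-\mu_y}\frac1T\sum_{t=1}^T\mathbb{E}[B_F(x^{(t)},y^{(t)})]-\frac{\mu_x}{1-\mu_x}\frac1T\sum_{t=1}^T\mathbb{E}[B_F(x^{(t-1)},x^{(t)})],$$ with the convention $x^{(0)}:=x^{(1)}$.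
   Context: $B_F(a,b)=F(a)-F(b)-\langle\nabla F(b),a-b\rangle$ denotes the Bregman divergence of $F$, for $a,b\in\mathbb{R}^n$. The iterates $z^{(t)}$ are random (depending on the samples $\xi^{(t)}$) and all expectations are assumed finite. *)

(* Defs.v *)
From mathcomp Require Import all_boot all_order all_algebra.
From mathcomp Require Import all_classical all_reals all_analysis.
Set Implicit Arguments. Unset Strict Implicit. Unset Printing Implicit Defensive.
Import Order.TTheory GRing.Theory Num.Theory.
Import numFieldNormedType.Exports.
Local Open Scope ring_scope.

Definition dotp {R : realType} {n : nat} (a b : 'rV[R]_n) : R :=
  \sum_(i < n) a ord0 i * b ord0 i.

Definition basis_vec {R : realType} {n : nat} (i : 'I_n) : 'rV[R]_n :=
  \row_(j < n) (i == j)%:R.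

Definition grad {R : realType} {n : nat} (F : 'rV[R]_n -> R) (x : 'rV[R]_n)
  : 'rV[R]_n := \row_(i < n) derive F x (basis_vec i).

Definition bregman {R : realType} {n : nat} (F : 'rV[R]_n -> R) (a b : 'rV[R]_n)
  : R := F a - F b - dotp (grad F b) (a - b).

Definition convex_fun {R : realType} {n : nat} (F : 'rV[R]_n -> R) : Prop :=
  forall (x y : 'rV[R]_n) (l : R), 0 <= l -> l <= 1 ->
    F (l *: x + (1 - l) *: y) <= l * F x + (1 - l) * F y.

Definition is_minimizer {R : realType} {n : nat} (F : 'rV[R]_n -> R)
  (xs : 'rV[R]_n) : Prop := forall x, F xs <= F x.

(* Generalized Primal Averaging sequence, indexed so that gpa_x mux z t = x^(t)
   for t >= 1, with the convention x^(0) := x^(1) = z^(1). *)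
Fixpoint gpa_x {R : realType} {n : nat} (mux : R) (z : nat -> 'rV[R]_n)
  (t : nat) : 'rV[R]_n :=
  match t with
  | 0 => z 1%N
  | 1 => z 1%N
  | t'.+1 => mux *: gpa_x mux z t' + (1 - mux) *: z t
  end.

Definition gpa_y {R : realType} {n : nat} (mux muy : R) (z : nat -> 'rV[R]_n)
  (t : nat) : 'rV[R]_n := muy *: gpa_x mux z t + (1 - muy) *: z t.

Definition gpa_xbar {R : realType} {n : nat} (mux : R) (z : nat -> 'rV[R]_n)
  (T : nat) : 'rV[R]_n := T%:R^-1 *: \sum_(1 <= t < T.+1) gpa_x mux z t.

(* Main.v *)
Require Import Defs.
From mathcomp Require Import all_boot all_order all_algebra.
From mathcomp Require Import all_classical all_reals all_analysis.
From mathcomp Require Import lra ring.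
Import Order.TTheory GRing.Theory Num.Theory.
Import numFieldNormedType.Exports.
Local Open Scope ring_scope.

Section S.
Variables (R : realType) (n : nat).
Implicit Types (F : 'rV[R]_n -> R).

Lemma basis_delta (i : 'I_n) : basis_vec i = delta_mx 0 i :> 'rV[R]_n.
Proof. by apply/rowP => j; rewrite !mxE eqxx /= eq_sym. Qed.

Lemma dotp_grad F b v : differentiable F b -> dotp (grad F b) v = derive F b v.
Proof.
move=> db; rewrite deriveE // [in RHS](row_sum_delta v) linear_sum /dotp.
apply: eq_bigr => i _; rewrite linearZ /= mxE deriveE // basis_delta.
by rewrite mulrC.
Qed.

Lemma bregman_ge0 F a b : convex_fun F -> differentiable F b -> 0 <= bregman F a b.
Proof.
move=> cF db; rewrite /bregman dotp_grad // subr_ge0.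
set v := a - b.
have cv : derivable F b v by exact: diff_derivable.
rewrite /derive.
apply: (@cvgr_to_le _ (at_right (0:R)) _ _ (fun h => h^-1 *: ((F \o shift b) (h *: v) - F b))).
  move=> A /cv /=.
  rewrite /= /nbhs /= /within /=. rewrite /dnbhs /at_right /within /=.
  move=> H. near=> h => h0. have := near H h. apply => //. exact: lt0r_neq0.
near=> h.
have h0 : 0 < h by near: h; exact: nbhs_right_gt.
have h1 : h < 1 by near: h; exact: nbhs_right_lt.
rewrite /= /v.
have -> : h *: (a - b) + b = h *: a + (1 - h) *: b.
  by rewrite scalerBr scalerBl scale1r -addrA [(- _) + _]addrC.
have := cF a b h (ltW h0) (ltW h1).
rewrite -[_ *: (_ - _)]/(h^-1 * (_ - _)).
rewrite ler_pdivrMl //.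
move=> H; lra.
Unshelve. all: by end_near.
Qed.

Lemma dotpD (g u v : 'rV[R]_n) : dotp g (u + v) = dotp g u + dotp g v.
Proof. by rewrite /dotp -big_split; apply: eq_bigr => i _; rewrite mxE mulrDr. Qed.
Lemma dotpN (g u : 'rV[R]_n) : dotp g (- u) = - dotp g u.
Proof. by rewrite /dotp -sumrN; apply: eq_bigr => i _; rewrite mxE mulrN. Qed.
Lemma dotpZ (g u : 'rV[R]_n) k : dotp g (k *: u) = k * dotp g u.
Proof. by rewrite /dotp mulr_sumr; apply: eq_bigr => i _; rewrite mxE mulrCA. Qed.

Lemma step F (xs Xp zt X Y : 'rV[R]_n) (mux muy : R) :
  mux != 1 -> muy != 1 ->
  X = mux *: Xp + (1 - mux) *: zt -> Y = muy *: X + (1 - muy) *: zt ->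
  dotp (grad F Y) (zt - xs) =
    F X - F xs + mux / (1 - mux) * (F X - F Xp)
    + mux / (1 - mux) * bregman F Xp X + (1 - muy)^-1 * bregman F Y X
    + muy / (1 - muy) * bregman F X Y + bregman F xs Y.
Proof.
move=> hx hy eX eY; rewrite /bregman.
move: (grad F Y) (grad F X) (F X) (F Y) => g h FX FY.
rewrite eY eX.
rewrite !(dotpD, dotpN, dotpZ).
have hx' : 1 - mux != 0 by rewrite subr_eq0 eq_sym.
have hy' : 1 - muy != 0 by rewrite subr_eq0 eq_sym.
field; rewrite ?hx' ?hy' // .
Qed.

Lemma jensen F (v : nat -> 'rV[R]_n) (k : nat) : convex_fun F -> (0 < k)%N ->
  F (k%:R^-1 *: \sum_(1 <= t < k.+1) v t) <= k%:R^-1 * \sum_(1 <= t < k.+1) F (v t).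
Proof.
move=> cF; elim: k => // -[_ _|k IH _].
  by rewrite !big_nat1 invr1 scale1r mul1r.
rewrite big_nat_recr //= [X in _ <= _ * X]big_nat_recr //=.
set S := \sum_(1 <= t < k.+2) v t.
set SF := \sum_(1 <= t < k.+2) F (v t).
have IH' := IH isT.
have k0 : 0 < k.+1%:R :> R by rewrite ltr0n.
have k1 : 0 < k.+2%:R :> R by rewrite ltr0n.
set l := k.+2%:R^-1 : R.
have l0 : 0 <= l by rewrite invr_ge0 ltW.
have l1 : l <= 1 by rewrite invf_le1 // ler1n.
have eq1 : l *: (S + v k.+2) = l *: v k.+2 + (1 - l) *: (k.+1%:R^-1 *: S).
  rewrite scalerA scalerDr addrC; congr (_ + _); congr (_ *: _).
  rewrite /l -natr1; field; have hk := ler0n R k; apply/andP; split; apply: lt0r_neq0; lra.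
rewrite eq1; apply: (le_trans (cF _ _ _ l0 l1)).
have -> : l * (SF + F (v k.+2)) = l * F (v k.+2) + (1 - l) * (k.+1%:R^-1 * SF).
  rewrite /l -natr1; field; have hk := ler0n R k; apply/andP; split; apply: lt0r_neq0; lra.
rewrite lerD2l ler_wpM2l //; by rewrite subr_ge0.
Qed.

Lemma gpa_x_rec (mux : R) (zz : nat -> 'rV[R]_n) t : (1 <= t)%N ->
  gpa_x mux zz t = mux *: gpa_x mux zz t.-1 + (1 - mux) *: zz t.
Proof.
case: t => // -[|t] _ //=.
by rewrite -scalerDl addrC subrK scale1r.
Qed.

Lemma pointwise F (xs : 'rV[R]_n) (mux muy : R) (zz : nat -> 'rV[R]_n) (T : nat) :
  convex_fun F -> (forall x, differentiable F x) -> is_minimizer F xs ->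
  0 <= mux < 1 -> 0 <= muy < 1 -> (0 < T)%N ->
  F (gpa_xbar mux zz T) - F xs <=
     T%:R^-1 * (\sum_(1 <= t < T.+1) dotp (grad F (gpa_y mux muy zz t)) (zz t - xs))
   + (mux / (1 - mux) * T%:R^-1) * (F (gpa_x mux zz 1) - F xs)
   - ((1 - muy)^-1 * T%:R^-1) *
       (\sum_(1 <= t < T.+1) bregman F (gpa_y mux muy zz t) (gpa_x mux zz t))
   - (muy / (1 - muy) * T%:R^-1) *
       (\sum_(1 <= t < T.+1) bregman F (gpa_x mux zz t) (gpa_y mux muy zz t))
   - (mux / (1 - mux) * T%:R^-1) *
       (\sum_(1 <= t < T.+1) bregman F (gpa_x mux zz t.-1) (gpa_x mux zz t)).
Proof.
move=> cF dF hmin /andP[mux0 mux1] /andP[muy0 muy1] T0.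
set X := gpa_x mux zz; set Y := gpa_y mux muy zz.
set a := mux / (1 - mux); set c := (1 - muy)^-1; set b := muy / (1 - muy).
have a0 : 0 <= a by rewrite divr_ge0 // subr_ge0 ltW.
have hstep t : (1 <= t)%N -> dotp (grad F (Y t)) (zz t - xs) =
    F (X t) - F xs + a * (F (X t) - F (X t.-1))
    + a * bregman F (X t.-1) (X t) + c * bregman F (Y t) (X t)
    + b * bregman F (X t) (Y t) + bregman F xs (Y t).
  move=> t1; apply: step; first by rewrite lt_eqF.
  - by rewrite lt_eqF.
  - exact: gpa_x_rec.
  - by [].
have eD : \sum_(1 <= t < T.+1) dotp (grad F (Y t)) (zz t - xs) =
    \sum_(1 <= t < T.+1) (F (X t) - F xs)
    + a * \sum_(1 <= t < T.+1) (F (X t) - F (X t.-1))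
    + a * \sum_(1 <= t < T.+1) bregman F (X t.-1) (X t)
    + c * \sum_(1 <= t < T.+1) bregman F (Y t) (X t)
    + b * \sum_(1 <= t < T.+1) bregman F (X t) (Y t)
    + \sum_(1 <= t < T.+1) bregman F xs (Y t).
  rewrite !mulr_sumr -!big_split; apply: eq_big_nat => t /andP[t1 _]; exact: hstep.
have tele : \sum_(1 <= t < T.+1) (F (X t) - F (X t.-1)) = F (X T) - F (X 1).
  rewrite big_add1 /= (telescope_sumr (fun t => F (X t))) //.
have B0 : 0 <= \sum_(1 <= t < T.+1) bregman F xs (Y t).
  by apply: sumr_ge0 => t _; exact: bregman_ge0.
have FT : a * (F xs - F (X 1)) <= a * (F (X T) - F (X 1)).
  by rewrite ler_wpM2l // lerD2r hmin.
have key : \sum_(1 <= t < T.+1) (F (X t) - F xs) <=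
    \sum_(1 <= t < T.+1) dotp (grad F (Y t)) (zz t - xs)
    + a * (F (X 1) - F xs)
    - c * \sum_(1 <= t < T.+1) bregman F (Y t) (X t)
    - b * \sum_(1 <= t < T.+1) bregman F (X t) (Y t)
    - a * \sum_(1 <= t < T.+1) bregman F (X t.-1) (X t).
  rewrite eD tele; move: FT B0; rewrite !mulrBr; lra.
have T0' : 0 < T%:R :> R by rewrite ltr0n.
have J : F (gpa_xbar mux zz T) - F xs <= T%:R^-1 * \sum_(1 <= t < T.+1) (F (X t) - F xs).
  rewrite sumrB big_const_nat /= iter_addr addr0 mulrBr.
  have -> : T%:R^-1 * (F xs *+ (T.+1 - 1)) = F xs.
    by rewrite subn1 /= -[F xs *+ T]mulr_natr mulrCA mulVf ?mulr1 // lt0r_neq0.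
  by rewrite lerD2r; exact: jensen.
apply: (le_trans J).
have -> : forall (s1 s2 s3 s4 s5 : R),
   T%:R^-1 * s1 + a * T%:R^-1 * s2 - c * T%:R^-1 * s3 - b * T%:R^-1 * s4 - a * T%:R^-1 * s5
   = T%:R^-1 * (s1 + a * s2 - c * s3 - b * s4 - a * s5).
  by move=> *; ring.
by rewrite ler_wpM2l // invr_ge0 ltW.
Qed.
End S.

Section Exp.
Local Open Scope ereal_scope.
Variables (R : realType) (d : measure_display) (Omega : measurableType d) (P : probability Omega R).
Definition Eint (f : Omega -> R) := P.-integrable setT (EFin \o f).

Lemma EB (f g : Omega -> R) : Eint f -> Eint g ->
  Eint (fun w => f w - g w)%R /\ 'E_P[(fun w => f w - g w)%R] = 'E_P[f] - 'E_P[g].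
Proof.
move=> hf hg.
have e : EFin \o (fun w => f w - g w)%R = (EFin \o f) \- (EFin \o g).
  by apply/funext => w /=; rewrite EFinB.
split; first by rewrite /Eint e; exact: integrableB.
rewrite unlock /=. rewrite -[fun w => _]/(EFin \o (fun w => f w - g w)%R) e.
by rewrite integralB.
Qed.

Lemma ED (f g : Omega -> R) : Eint f -> Eint g ->
  Eint (fun w => f w + g w)%R /\ 'E_P[(fun w => f w + g w)%R] = 'E_P[f] + 'E_P[g].
Proof.
move=> hf hg.
have e : EFin \o (fun w => f w + g w)%R = (EFin \o f) \+ (EFin \o g).
  by apply/funext => w /=; rewrite EFinD.
split; first by rewrite /Eint e; exact: integrableD.
rewrite unlock /=. rewrite -[fun w => _]/(EFin \o (fun w => f w + g w)%R) e.
by rewrite integralD.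
Qed.

Lemma EZ (k : R) (f : Omega -> R) : Eint f ->
  Eint (fun w => k * f w)%R /\ 'E_P[(fun w => k * f w)%R] = k%:E * 'E_P[f].
Proof.
move=> hf.
have e : EFin \o (fun w => k * f w)%R = (fun w => k%:E * (EFin \o f) w).
  by apply/funext => w /=; rewrite EFinM.
split; first by rewrite /Eint e; exact: integrableZl.
rewrite unlock /=. rewrite -[fun w => _]/(EFin \o (fun w => k * f w)%R) e.
by rewrite integralZl.
Qed.

Lemma Esum (f : nat -> Omega -> R) (T : nat) :
  (forall t, (1 <= t <= T)%N -> Eint (f t)) ->
  Eint (fun w => \sum_(1 <= t < T.+1) f t w)%R /\
  'E_P[(fun w => \sum_(1 <= t < T.+1) f t w)%R] = \sum_(1 <= t < T.+1) 'E_P[f t].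
Proof.
elim: T => [_|T IH hf].
  have e : (fun w => \sum_(1 <= t < 1) f t w)%R = cst 0%R.
    by apply/funext => w; rewrite big_geq.
  rewrite e big_geq // expectation_cst; split => //.
  rewrite /Eint; apply: (eq_integrable _ (cst 0)) => //.
  exact: integrable0.
have [i1 e1] : Eint (fun w => \sum_(1 <= t < T.+1) f t w)%R /\
  'E_P[(fun w => \sum_(1 <= t < T.+1) f t w)%R] = \sum_(1 <= t < T.+1) 'E_P[f t].
  apply: IH => t /andP[t1 tT]; apply: hf; rewrite t1 /=; exact: leqW.
have iT : Eint (f T.+1) by apply: hf; rewrite /= leqnn.
have e : (fun w => \sum_(1 <= t < T.+2) f t w)%R =
         (fun w => (\sum_(1 <= t < T.+1) f t w) + f T.+1 w)%R.
  by apply/funext => w; rewrite big_nat_recr.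
rewrite e big_nat_recr //=.
have [i2 e2] := ED _ _ i1 iT.
by split => //; rewrite e2 e1.
Qed.
End Exp.

Theorem theorem1 (R : realType) (n : nat) (F : 'rV[R]_n -> R)
  (hconv : convex_fun F) (hdiff : forall x : 'rV[R]_n, differentiable F x)
  (xs : 'rV[R]_n) (hmin : is_minimizer F xs)
  (d : measure_display) (Omega : measurableType d) (P : probability Omega R)
  (mux muy : R) (hmux : 0 <= mux < 1) (hmuy : 0 <= muy < 1)
  (T : nat) (hT : (0 < T)%N)
  (z : nat -> Omega -> 'rV[R]_n)
  (int_xbar : P.-integrable setT
     (EFin \o (fun w => F (gpa_xbar mux (z ^~ w) T) - F xs)))
  (int_x1 : P.-integrable setT
     (EFin \o (fun w => F (gpa_x mux (z ^~ w) 1) - F xs)))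
  (int_dot : forall t, (1 <= t <= T)%N -> P.-integrable setT
     (EFin \o (fun w => dotp (grad F (gpa_y mux muy (z ^~ w) t)) (z t w - xs))))
  (int_Byx : forall t, (1 <= t <= T)%N -> P.-integrable setT
     (EFin \o (fun w => bregman F (gpa_y mux muy (z ^~ w) t) (gpa_x mux (z ^~ w) t))))
  (int_Bxy : forall t, (1 <= t <= T)%N -> P.-integrable setT
     (EFin \o (fun w => bregman F (gpa_x mux (z ^~ w) t) (gpa_y mux muy (z ^~ w) t))))
  (int_Bxx : forall t, (1 <= t <= T)%N -> P.-integrable setT
     (EFin \o (fun w => bregman F (gpa_x mux (z ^~ w) t.-1) (gpa_x mux (z ^~ w) t)))) :
  ('E_P[fun w => (F (gpa_xbar mux (z ^~ w) T) - F xs)%R] <=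
     (T%:R^-1)%:E *
       (\sum_(1 <= t < T.+1)
          'E_P[fun w => (dotp (grad F (gpa_y mux muy (z ^~ w) t)) (z t w - xs))%R])
   + (mux / (1 - mux) * T%:R^-1)%:E *
       'E_P[fun w => (F (gpa_x mux (z ^~ w) 1) - F xs)%R]
   - ((1 - muy)^-1 * T%:R^-1)%:E *
       (\sum_(1 <= t < T.+1)
          'E_P[fun w => (bregman F (gpa_y mux muy (z ^~ w) t) (gpa_x mux (z ^~ w) t))%R])
   - (muy / (1 - muy) * T%:R^-1)%:E *
       (\sum_(1 <= t < T.+1)
          'E_P[fun w => (bregman F (gpa_x mux (z ^~ w) t) (gpa_y mux muy (z ^~ w) t))%R])
   - (mux / (1 - mux) * T%:R^-1)%:E *
       (\sum_(1 <= t < T.+1)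
          'E_P[fun w => (bregman F (gpa_x mux (z ^~ w) t.-1) (gpa_x mux (z ^~ w) t))%R]))%E.
Proof.
pose Dt := fun t w => dotp (grad F (gpa_y mux muy (z ^~ w) t)) (z t w - xs).
pose B1 := fun t w => bregman F (gpa_y mux muy (z ^~ w) t) (gpa_x mux (z ^~ w) t).
pose B2 := fun t w => bregman F (gpa_x mux (z ^~ w) t) (gpa_y mux muy (z ^~ w) t).
pose B3 := fun t w => bregman F (gpa_x mux (z ^~ w) t.-1) (gpa_x mux (z ^~ w) t).
pose A := fun w => F (gpa_x mux (z ^~ w) 1) - F xs.
have [iS1 eS1] := @Esum _ _ _ P Dt T int_dot.
have [iS2 eS2] := @Esum _ _ _ P B1 T int_Byx.
have [iS3 eS3] := @Esum _ _ _ P B2 T int_Bxy.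
have [iS4 eS4] := @Esum _ _ _ P B3 T int_Bxx.
have [iZ1 eZ1] := @EZ _ _ _ P (T%:R^-1) _ iS1.
have [iZ2 eZ2] := @EZ _ _ _ P (mux / (1 - mux) * T%:R^-1) A int_x1.
have [iZ3 eZ3] := @EZ _ _ _ P ((1 - muy)^-1 * T%:R^-1) _ iS2.
have [iZ4 eZ4] := @EZ _ _ _ P (muy / (1 - muy) * T%:R^-1) _ iS3.
have [iZ5 eZ5] := @EZ _ _ _ P (mux / (1 - mux) * T%:R^-1) _ iS4.
have [i1 e1] := @ED _ _ _ P _ _ iZ1 iZ2.
have [i2 e2] := @EB _ _ _ P _ _ i1 iZ3.
have [i3 e3] := @EB _ _ _ P _ _ i2 iZ4.
have [i4 e4] := @EB _ _ _ P _ _ i3 iZ5.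
rewrite -eS1 -eS2 -eS3 -eS4 -eZ1 -eZ2 -eZ3 -eZ4 -eZ5 -e1 -e2 -e3 -e4.
rewrite unlock; apply: le_integral => //.
move=> w _; rewrite lee_fin /=.
exact: pointwise.
Qed.
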